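(* Let $(X,d_X,\mu_X)$ be a compact metric measure space whose measure $\mu_X$ is strictly positive. Then the distance kernel embedding $\Phi:X\to\mathbb{C}^\infty$ is injective.
   Context: A metric measure space carries a Radon Borel measure; it is strictly positive if every nonempty open set has positive measure. The distance kernel operator $(D^Xf)(x)=\int_X f(y)d_X(x,y)\,d\mu_X(y)$ on $L^2(X,\mu_X)$ is compact self-adjoint; let $\phi_i$ be an orthonormal basis of real eigenfunctions with eigenvalues $\lambda_i$ ordered by decreasing absolute value (non-zero eigenvalues of multiplicity one, signs fixed by a convention). Set $\alpha_i=\sqrt{\lambda_i}\phi_i$ (square root with positive imaginary part if $\lambda_i<0$; eigenfunctions in the zero eigenspace replaced by the zero function). $\Phi(x)=(\alpha_1(x),\alpha_2(x),\dots)\in\mathbb{C}^\infty$. *)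

(* Defs.v *)
From HB Require Import structures.
From mathcomp Require Import all_boot all_order all_algebra.
From mathcomp Require Import all_classical all_reals all_analysis.
From mathcomp Require Import complex.
Set Implicit Arguments. Unset Strict Implicit. Unset Printing Implicit Defensive.
Import Order.TTheory GRing.Theory Num.Theory.
Import numFieldNormedType.Exports.
Local Open Scope classical_set_scope.
Local Open Scope ring_scope.

Section MetricDefs.
Context {R : realType} {X : Type}.
Variable dist : X -> X -> R.

Definition is_metric :=
  [/\ forall x y, 0 <= dist x y,
      forall x y, dist x y = 0 <-> x = y,
      forall x y, dist x y = dist y x &
      forall x y z, dist x z <= dist x y + dist y z].

Definition dball (x : X) (r : R) : set X := [set y | dist x y < r].

Definition dopen (A : set X) : Prop :=
  forall x, A x -> exists2 r : R, 0 < r & dball x r `<=` A.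

(** compactness of the metric space (sequential compactness, which is
    equivalent to compactness for metric spaces) *)
Definition dcompact : Prop :=
  forall u : nat -> X, exists (phi : nat -> nat) (x : X),
    (forall n, (phi n < phi n.+1)%N) /\
    (fun n => dist (u (phi n)) x) @ \oo --> (0 : R).
End MetricDefs.

Definition dist_kernel_op {R : realType} (dm : measure_display)
  (X : measurableType dm) (mu : {measure set X -> \bar R})
  (dist : X -> X -> R) (f : X -> R) (x : X) : \bar R :=
  (\int[mu]_y (f y * dist x y)%:E)%E.

Definition csqrt_real {R : rcfType} (l : R) : R[i] :=
  if 0 <= l then ((Num.sqrt l)%:C)%C else 'i%C * ((Num.sqrt (- l))%:C)%C.

(** The embedding Phi(x) = (alpha_1(x), alpha_2(x), ...), alpha_i = sqrt(lambda_i) phi_i,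
    with the indices outside the (initial segment) index set I padded by 0. *)
Definition dk_embedding {R : rcfType} {X : Type} (I : set nat)
  (lam : nat -> R) (phi : nat -> X -> R) (x : X) : nat -> R[i] :=
  fun i => if `[< I i >] then csqrt_real (lam i) * ((phi i x)%:C)%C else 0.

(* Main.v *)
Require Import Defs.
Set Warnings "-all".
From HB Require Import structures.
From mathcomp Require Import all_boot all_order all_algebra.
From mathcomp Require Import all_classical all_reals all_analysis.
From mathcomp Require Import complex.
From mathcomp Require Import measurable_realfun.
From mathcomp Require Import ring lra.
Import Order.TTheory GRing.Theory Num.Theory.
Import numFieldNormedType.Exports.
Local Open Scope classical_set_scope.
Local Open Scope ring_scope.
Local Open Scope ereal_scope.

Lemma dball_open (R : realType) (X : Type) (dist : X -> X -> R) :
  is_metric dist -> forall x r, dopen dist (dball dist x r).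
Proof.
case=> d0 d00 dsym dtri x r y; rewrite /dball /= => hy.
exists (r - dist x y)%R; first by rewrite subr_gt0.
move=> z /=; rewrite /dball /= => hz.
by apply: (le_lt_trans (dtri x y z)); rewrite -ltrBrDl.
Qed.
Arguments dball_open {R X dist}.

Lemma dopen_meas (R : realType) (dm : measure_display) (X : measurableType dm)
  (dist : X -> X -> R) :
  (@measurable _ X) = <<s [set A | dopen dist A] >> ->
  forall A, dopen dist A -> measurable A.
Proof. by move=> Hb A hA; rewrite Hb; apply: sub_sigma_algebra. Qed.
Arguments dopen_meas {R dm X dist} Hb {A}.

Lemma dist_meas (R : realType) (dm : measure_display) (X : measurableType dm)
  (dist : X -> X -> R) :
  is_metric dist ->
  (@measurable _ X) = <<s [set A | dopen dist A] >> ->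
  forall z, measurable_fun setT (dist z).
Proof.
move=> Hm Hb z; have E := measurable_realfun.RGenOInfty.measurableE R; apply: (measurability _ E).
move=> _ [_ [x ->] <-]; rewrite setTI.
apply: (dopen_meas Hb) => y /=. rewrite in_itv /= andbT => hy.
case: Hm => d0 d00 dsym dtri.
exists (dist z y - x)%R; first by rewrite subr_gt0.
move=> w; rewrite /dball /= in_itv /= andbT => hw.
have := dtri z w y; rewrite (dsym w y) => h.
lra.
Qed.
Arguments dist_meas {R dm X dist}.

Lemma incr_ge (phi : nat -> nat) : (forall n, (phi n < phi n.+1)%N) -> forall n, (n <= phi n)%N.
Proof. move=> h; elim=> [//|n IH]; exact: leq_ltn_trans IH (h n). Qed.

Lemma dist_bounded (R : realType) (X : Type) (dist : X -> X -> R) :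
  is_metric dist -> dcompact dist -> forall z, exists M, forall y, (dist z y <= M)%R.
Proof.
move=> [d0 d00 dsym dtri] Hc z; apply/not_existsP => hn.
have /choice [u hu] : forall n : nat, exists y, (n%:R < dist z y)%R.
  move=> n; have := hn n%:R; move=> /existsNP [y /negP]; rewrite -ltNge => hy.
  by exists y.
have [phi [x [hphi hcv]]] := Hc u.
have := proj1 (cvgr0Pnorm_lt _) hcv 1%R ltr01.
move=> [N _ hN].
pose n := maxn N (Num.trunc (dist z x + 1)).+1.
have hnN : (N <= n)%N by rewrite leq_maxl.
have h1 := hN _ hnN; rewrite /= ger0_norm // in h1.
have h2 := hu (phi n).
have h3 : (n%:R <= (phi n)%:R :> R)%R by rewrite ler_nat incr_ge.
have h4 := dtri z x (u (phi n)).
have h5 : (dist z x + 1 < n%:R)%R.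
  apply: (lt_le_trans (truncnS_gt _)); rewrite ler_nat; exact: leq_maxr.
rewrite (dsym x) in h4. lra.
Qed.
Arguments dist_bounded {R X dist}.

Lemma ae_lip (R : realType) (dm : measure_display) (X : measurableType dm)
  (dist : X -> X -> R) (mu : {measure set X -> \bar R}) :
  is_metric dist ->
  (@measurable _ X) = <<s [set A | dopen dist A] >> ->
  (forall A : set X, dopen dist A -> A !=set0 -> (0 < mu A)%E) ->
  forall (g : X -> R) (C : R), (0 <= C)%R ->
  (forall z w, (`|g z - g w| <= C * dist z w)%R) ->
  {ae mu, forall x, g x = 0%R} -> forall x, g x = 0%R.
Proof.
move=> Hm Hb Hpos g C C0 hL [N [mN muN sN]] x0; apply/eqP/negPn/negP => gx0.
have gp : (0 < `|g x0|)%R by rewrite normr_gt0.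
pose r := (`|g x0| / (C + 1))%R.
have rp : (0 < r)%R by rewrite divr_gt0 // ltr_wpDl.
have hb : dball dist x0 r `<=` N.
  move=> w; rewrite /dball /= => hw; apply: sN => /= gw0.
  have := hL x0 w; rewrite gw0 subr0 => h.
  have : (C * dist x0 w <= C * r)%R by rewrite ler_wpM2l // ltW.
  have : (C * r < `|g x0|)%R.
    rewrite /r mulrA ltr_pdivrMr ?ltr_wpDl //.
    rewrite mulrC ltr_pM2l //; lra.
  lra.
have := Hpos _ (dball_open Hm x0 r).
have x0b : dball dist x0 r x0 by rewrite /dball /=; case: Hm => _ h _ _; rewrite (proj2 (h _ _) erefl).
have := le_measure mu (mem_set (dopen_meas Hb (dball_open Hm x0 r))) (mem_set mN) hb.
move=> h1 /(_ (ex_intro _ x0 x0b)) h2.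
have h3 : (mu (dball dist x0 r) <= 0)%E by rewrite -muN; exact: h1.
by have := lt_le_trans h2 h3; rewrite ltxx.
Qed.
Arguments ae_lip {R dm X dist mu} _ _ _ {g C}.

Lemma muT_lty (dm : measure_display) (X : measurableType dm) (R : realType)
  (mu : {finite_measure set X -> \bar R}) : mu setT < +oo.
Proof. exact: fin_num_fun_lty (fin_num_measure mu). Qed.
Arguments muT_lty {dm X R}.

Lemma int_cst_lty (dm : measure_display) (X : measurableType dm) (R : realType)
  (mu : {finite_measure set X -> \bar R}) (f : X -> R) (M : R) :
  measurable_fun setT f -> (forall x, 0 <= f x <= M)%R ->
  \int[mu]_x (f x)%:E < +oo.
Proof.
move=> mf hf.
apply: (@le_lt_trans _ _ (\int[mu]_x (cst M%:E) x)).
  apply: ge0_le_integral => //.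
  - by move=> x _; rewrite lee_fin; case/andP: (hf x).
  - exact/measurable_realfun.measurable_EFinP.
  - by move=> x _; rewrite lee_fin; case/andP: (hf x).
rewrite integral_cst //.
have M0 : (0 <= M)%R by case/andP: (hf point) => h1 h2; apply: le_trans h2.
apply: lte_mul_pinfty => //. all: try by rewrite lee_fin.
exact: muT_lty.
Qed.
Arguments int_cst_lty {dm X R mu f} M.

Lemma L2_int (dm : measure_display) (X : measurableType dm) (R : realType)
  (mu : {finite_measure set X -> \bar R}) (f : X -> R) :
  measurable_fun setT f -> \int[mu]_x (f x * f x)%:E < +oo ->
  mu.-integrable setT (EFin \o f).
Proof.
move=> mf hf; apply/integrableP; split; first exact/measurable_realfun.measurable_EFinP.
have mff : measurable_fun setT (fun x => (f x * f x)%:E).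
  by apply/measurable_realfun.measurable_EFinP; exact: measurable_funM.
apply: (@le_lt_trans _ _ (\int[mu]_x (1%:E + (f x * f x)%:E))).
  apply: ge0_le_integral => //.
  - apply/measurableT_comp => //; exact/measurable_realfun.measurable_EFinP.
  - by apply: emeasurable_funD => //.
  - move=> x _ /=; rewrite lee_fin.
    have h : (`|f x| * `|f x| = f x * f x)%R by rewrite -normrM ger0_norm // -expr2 sqr_ge0.
    have a0 : (0 <= `|f x|)%R by [].
    rewrite -h; nra.
rewrite ge0_integralD //.
- rewrite lte_add_pinfty // integral_cst // mul1e; exact: muT_lty.
- by move=> x _; rewrite lee_fin -expr2 sqr_ge0.
Qed.

Lemma bnd_of (X : Type) (R : realType) (f : X -> R) (M : R) :
  (forall y, `|f y| <= M)%R -> [bounded f x | x in setT].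
Proof.
move=> hM; exists M; split; first exact: num_real.
by move=> M' hM' y _ /=; apply: le_trans (hM y) _; apply: ltW.
Qed.
Arguments bnd_of {X R f M}.

Lemma int_mul (dm : measure_display) (X : measurableType dm) (R : realType)
  (mu : {measure set X -> \bar R}) (f h : X -> R) (M : R) :
  mu.-integrable setT (EFin \o f) -> measurable_fun setT h ->
  (forall y, `|h y| <= M)%R ->
  mu.-integrable setT (fun y => (f y * h y)%:E).
Proof.
move=> fi mh hM.
have -> : (fun y => (f y * h y)%:E) = ((EFin \o f) \* (EFin \o h))%E.
  by apply/funext => y; rewrite /= EFinM.
exact: (integrableMl measurableT fi mh (bnd_of hM)).
Qed.
Arguments int_mul {dm X R mu f h M}.

Lemma dist_lip (R : realType) (X : Type) (dist : X -> X -> R) :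
  is_metric dist -> forall z w y, (`|dist z y - dist w y| <= dist z w)%R.
Proof.
case=> d0 d00 dsym dtri z w y; rewrite ler_norml.
have := dtri z w y; have := dtri w z y; rewrite (dsym w z); lra.
Qed.
Arguments dist_lip {R X dist}.

Lemma kernel_lip (R : realType) (dm : measure_display) (X : measurableType dm)
  (dist : X -> X -> R) (mu : {finite_measure set X -> \bar R}) (psi : X -> R) :
  is_metric dist -> dcompact dist ->
  (@measurable _ X) = <<s [set A | dopen dist A] >> ->
  mu.-integrable setT (EFin \o psi) ->
  (forall z, mu.-integrable setT (fun y => (psi y * dist z y)%:E)) /\
  exists C, (0 <= C)%R /\ forall z w,
    (`|fine (\int[mu]_y (psi y * dist z y)%:E) - fine (\int[mu]_y (psi y * dist w y)%:E)|
       <= C * dist z w)%R.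
Proof.
move=> Hm Hc Hb ipsi.
have iz : forall z, mu.-integrable setT (fun y => (psi y * dist z y)%:E).
  move=> z; have [M hM] := dist_bounded Hm Hc z.
  apply: (int_mul (M := M) ipsi (dist_meas Hm Hb z)) => y.
  case: Hm => d0 _ _ _; by rewrite ger0_norm.
split => //.
have mpsi : measurable_fun setT psi.
  by case/integrableP: ipsi => /measurable_realfun.measurable_EFinP.
have fa : \int[mu]_y (`|psi y|)%:E \is a fin_num.
  case/integrableP: ipsi => _ h; rewrite ge0_fin_numE //; last exact: integral_ge0.
exists (fine (\int[mu]_y (`|psi y|)%:E)); split.
  by rewrite fine_ge0 // integral_ge0.
move=> z w; rewrite -lee_fin EFinM fineK //.
have fz := integrable_fin_num measurableT (iz z).
have fw := integrable_fin_num measurableT (iz w).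
rewrite -abse_EFin EFinB fineK // fineK // -integralB_EFin //.
apply: le_trans (le_abse_integral _ _ _) _ => //.
  apply/emeasurable_funB; by case/integrableP: (iz z); case/integrableP: (iz w).
rewrite -ge0_integralZr //.
all: try (by move=> x _; rewrite lee_fin).
all: try (by rewrite lee_fin; case: Hm => d0 _ _ _).
all: try (by apply/measurable_realfun.measurable_EFinP; apply: measurableT_comp).
apply: ge0_le_integral => //.
- apply: measurableT_comp => //; apply/emeasurable_funB; by case/integrableP: (iz z); case/integrableP: (iz w).
- apply: emeasurable_funM; first by apply/measurable_realfun.measurable_EFinP; apply: measurableT_comp.
  exact: measurable_cst.
- move=> y _ /=; rewrite -EFinM lee_fin -mulrBr normrM ler_wpM2l //.
  exact: dist_lip.
- exact: iz.
- exact: iz.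
Qed.
Arguments kernel_lip {R dm X dist mu psi}.

Local Close Scope ereal_scope.

Theorem lemma3p6 (R : realType) (dm : measure_display) (X : measurableType dm)
  (dist : X -> X -> R)
  (* (X, dist) is a compact metric space, measurable sets = Borel sets *)
  (Hmetric : is_metric dist)
  (Hcompact : dcompact dist)
  (Hborel : (@measurable _ X) = <<s [set A | dopen dist A] >>)
  (* a finite (hence Radon, X being compact metric) Borel measure *)
  (mu : {finite_measure set X -> \bar R})
  (* strictly positive *)
  (Hpos : forall A : set X, dopen dist A -> A !=set0 -> (0 < mu A)%E)
  (* orthonormal basis (phi_i)_{i in I} of real eigenfunctions of D^X *)
  (I : set nat) (HI : forall i j, I j -> (i <= j)%N -> I i)
  (lam : nat -> R) (phi : nat -> X -> R)
  (Hmeas : forall i, I i -> measurable_fun setT (phi i))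
  (Horth : forall i j, I i -> I j ->
     (\int[mu]_x (phi i x * phi j x)%:E)%E = (if i == j then 1 else 0)%:E)
  (Hcomplete : forall f : X -> R, measurable_fun setT f ->
     (\int[mu]_x (f x ^+ 2)%:E < +oo)%E ->
     (forall i, I i -> (\int[mu]_x (f x * phi i x)%:E)%E = 0%E) ->
     {ae mu, forall x, f x = 0})
  (Heigen : forall i, I i ->
     {ae mu, forall x, dist_kernel_op mu dist (phi i) x = (lam i * phi i x)%:E})
  (* pointwise representative: phi_i = (D^X phi_i) / lambda_i for lambda_i <> 0 *)
  (Hrepr : forall i, I i -> lam i != 0 -> forall x,
     (dist_kernel_op mu dist (phi i) x = (lam i * phi i x)%:E))
  (* eigenvalues ordered by decreasing absolute value *)
  (Hord : forall i j, I i -> I j -> (i <= j)%N -> `|lam j| <= `|lam i|)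
  (* non-zero eigenvalues have multiplicity one *)
  (Hmult : forall i j, I i -> I j -> i != j -> lam i != 0 -> lam i != lam j) :
  injective (dk_embedding I lam phi).
Proof.
move=> x x' hxx'.
have Hm := Hmetric; case: Hmetric => d0 d00 dsym dtri.
pose f := fun y => (dist x y - dist x' y)%R.
have mf : measurable_fun setT f by apply: measurable_funB; exact: dist_meas.
have flip : forall z w, (`|f z - f w| <= 2 * dist z w)%R.
  move=> z w; rewrite /f.
  have h1 := dist_lip Hm z w x; have h2 := dist_lip Hm z w x'.
  rewrite (dsym z x) (dsym w x) (dsym z x') (dsym w x') in h1 h2.
  move: h1 h2; rewrite !ler_norml => /andP[h1 h1'] /andP[h2 h2']; lra.
have fsq : (\int[mu]_y ((f y) ^+ 2)%:E < +oo)%E.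
  apply: (int_cst_lty (dist x x' ^+ 2)); first exact: measurable_funX.
  move=> y; have := dist_lip Hm x x' y; rewrite /f ler_norml => /andP[h1 h2].
  have h0 := d0 x x'.
  by rewrite !expr2; apply/andP; split; [rewrite -expr2 sqr_ge0| nra].
have forth : forall i, I i -> (\int[mu]_y (f y * phi i y)%:E = 0)%E.
  move=> i Ii.
  have ipsi : mu.-integrable setT (EFin \o phi i).
    apply: L2_int; first exact: Hmeas.
    by rewrite Horth // eqxx ltry.
  have [iz [C [C0 hC]]] := kernel_lip Hm Hcompact Hborel ipsi.
  have -> : (fun y => (f y * phi i y)%:E) =
      (fun y => ((phi i y * dist x y)%:E - (phi i y * dist x' y)%:E)%E).
    by apply/funext => y; rewrite -EFinB /f; congr (_%:E); ring.
  rewrite (integralB_EFin measurableT (iz x) (iz x')).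
  have Dx : (dist_kernel_op mu dist (phi i) x = dist_kernel_op mu dist (phi i) x').
    have [l0|ln0] := eqVneq (lam i) 0%R.
    - pose G := fun z => fine (dist_kernel_op mu dist (phi i) z).
      have GE : forall z, dist_kernel_op mu dist (phi i) z = (G z)%:E.
        move=> z; rewrite /G fineK // /dist_kernel_op; have := integrable_fin_num measurableT (iz z). exact.
      have G0 : forall z, G z = 0%R.
        apply: (ae_lip Hm Hborel Hpos C0); first exact: hC.
        have [N [mN muN sN]] := Heigen i Ii.
        exists N; split => // y /= hy; apply: sN => /= hD; apply: hy.
        by rewrite /G hD l0 mul0r.
      by rewrite !GE !G0.
    - rewrite !Hrepr //.
      have := congr1 (fun g => g i) hxx'; rewrite /dk_embedding asboolT //.
      have hc : csqrt_real (lam i) != 0%R.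
        rewrite /csqrt_real; case: ifP => hl.
        - apply/eqP => /(congr1 (@complex.Re R)) /= /eqP; rewrite sqrtr_eq0 => hl'.
          by move/negP: ln0; apply; rewrite eq_le hl' hl.
        - apply/eqP => /(congr1 (@complex.Im R)) /=; rewrite mul0r mul1r add0r => /eqP.
          rewrite sqrtr_eq0 oppr_le0 => hl'; by rewrite hl' in hl.
      by move/(mulfI hc)/(congr1 (@complex.Re R)) => /= ->.
  by move: Dx; rewrite /dist_kernel_op => ->; rewrite subee //; have := integrable_fin_num measurableT (iz x'); exact.
have fae := Hcomplete f mf fsq forth.
have f0 := ae_lip Hm Hborel Hpos (ler0n _ 2) flip fae x.
move: f0; rewrite /f; have := d00 x x; case => _ /(_ erefl) ->.
rewrite sub0r => /eqP; rewrite oppr_eq0 => /eqP /d00 ->; done.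
Qed.
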